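(* Let $A,B\in\mathbb{T}^{m\times n}$, with every column of $A$ and every row of $B$ containing at least one finite entry, and let $F=A^\sharp\circ B$, i.e. $F(x)=A^\sharp(B\odot x)$. Suppose there exists $v\in\mathbb{R}^n$ such that $F(v)=\rho(F)+v$. Then \[ R(F)\le (n-1)\bigl(|\rho(F)|+W\bigr). \]
   Context: $\mathbb{T}=\mathbb{R}\cup\{-\infty\}$. $(B\odot x)_i=\max_j(B_{ij}+x_j)$; $A^\sharp(y)_j=\min_i(-A_{ij}+y_i)$ with $(+\infty)+(-\infty)=+\infty$. A bias vector is $v\in\mathbb{R}^n$ with $F(v)=\lambda+v$ for some $\lambda\in\mathbb{R}$ (entrywise addition); this $\lambda=\rho(F)$ is unique. $\|x\|_H=\max_ix_i-\min_ix_i$, and $R(F)=\inf\{\|u\|_H: u\in\mathbb{R}^n,\ F(u)=\rho(F)+u\}$. $W=\max\{|A_{ij}-B_{ih}|: A_{ij}\ne-\infty,\ B_{ih}\ne-\infty,\ i\in[m],\ j,h\in[n]\}$. *)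

(* Defs.v *)
From Stdlib Require Import Reals Lra List.
Import ListNotations.
Open Scope R_scope.

(* Extended reals R ∪ {-oo, +oo}. Tropical entries T = R ∪ {-oo} are
   represented by option R (None = -oo) and embedded into ER. *)
Inductive ER := NegInf | Fin (r : R) | PosInf.

Definition toE (a : option R) : ER :=
  match a with None => NegInf | Some r => Fin r end.

Definition eneg (a : ER) : ER :=
  match a with NegInf => PosInf | Fin r => Fin (- r) | PosInf => NegInf end.

(* addition with the convention (+oo) + (-oo) = +oo *)
Definition eadd (a b : ER) : ER :=
  match a, b with
  | PosInf, _ | _, PosInf => PosInf
  | NegInf, _ | _, NegInf => NegInf
  | Fin x, Fin y => Fin (x + y)
  end.

Definition emax (a b : ER) : ER :=
  match a, b with
  | PosInf, _ | _, PosInf => PosInf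
  | NegInf, c | c, NegInf => c
  | Fin x, Fin y => Fin (Rmax x y)
  end.

Definition emin (a b : ER) : ER :=
  match a, b with
  | NegInf, _ | _, NegInf => NegInf
  | PosInf, c | c, PosInf => c
  | Fin x, Fin y => Fin (Rmin x y)
  end.

(* An m x n tropical matrix: entry (i,j) for i < m, j < n. *)
Definition tmat := nat -> nat -> option R.

Definition tmul (n : nat) (B : tmat) (x : nat -> R) (i : nat) : ER :=
  fold_right emax NegInf (map (fun j => eadd (toE (B i j)) (Fin (x j))) (seq 0 n)).

Definition sharp (m : nat) (A : tmat) (y : nat -> ER) (j : nat) : ER :=
  fold_right emin PosInf (map (fun i => eadd (eneg (toE (A i j))) (y i)) (seq 0 m)).

Definition Fmap (m n : nat) (A B : tmat) (x : nat -> R) : nat -> ER :=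
  sharp m A (tmul n B x).

Definition is_bias (m n : nat) (A B : tmat) (u : nat -> R) (lam : R) : Prop :=
  forall j, (j < n)%nat -> Fmap m n A B u j = Fin (lam + u j).

Definition hmax (n : nat) (x : nat -> R) : R := fold_right Rmax (x 0%nat) (map x (seq 0 n)).
Definition hmin (n : nat) (x : nat -> R) : R := fold_right Rmin (x 0%nat) (map x (seq 0 n)).
Definition hilbert (n : nat) (x : nat -> R) : R := hmax n x - hmin n x.

(* W = max |A_ij - B_ih| over finite A_ij, B_ih (0 used as the neutral
   element of the max; all terms are >= 0 and the index set is nonempty
   under the hypotheses of the theorem). *)
Definition Wterm (A B : tmat) (i j h : nat) : R :=
  match A i j, B i h with
  | Some a, Some b => Rabs (a - b)
  | _, _ => 0
  end.
Definition Wconst (m n : nat) (A B : tmat) : R :=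
  fold_right Rmax 0 (map (fun i =>
    fold_right Rmax 0 (map (fun j =>
      fold_right Rmax 0 (map (fun h => Wterm A B i j h) (seq 0 n))) (seq 0 n))) (seq 0 m)).

Definition is_inf (S : R -> Prop) (r : R) : Prop :=
  (forall s, S s -> r <= s) /\ (forall r', (forall s, S s -> r' <= s) -> r' <= r).

(* The set {||u||_H : F(u) = lam + u}; R(F) is its infimum. *)
Definition bias_norms (m n : nat) (A B : tmat) (lam : R) (s : R) : Prop :=
  exists u, is_bias m n A B u lam /\ s = hilbert n u.

(* Main.v *)
Require Import Defs.
From Stdlib Require Import Reals Lra Lia List ClassicalEpsilon Classical.
Import ListNotations.
Open Scope R_scope.

Definition ele (a b : ER) : Prop :=
  match a, b with
  | NegInf, _ => True
  | _, PosInf => True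
  | Fin x, Fin y => x <= y
  | _, _ => False
  end.

Lemma Rmax_ge_iff r x y : r <= Rmax x y <-> r <= x \/ r <= y.
Proof. unfold Rmax; destruct (Rle_dec x y); split; intros; try lra; destruct H; lra. Qed.
Lemma Rmax_le_iff r x y : Rmax x y <= r <-> x <= r /\ y <= r.
Proof. unfold Rmax; destruct (Rle_dec x y); split; intros; try lra. Qed.
Lemma Rmin_ge_iff r x y : r <= Rmin x y <-> r <= x /\ r <= y.
Proof. unfold Rmin; destruct (Rle_dec x y); split; intros; try lra. Qed.
Lemma Rmin_le_iff r x y : Rmin x y <= r <-> x <= r \/ y <= r.
Proof. unfold Rmin; destruct (Rle_dec x y); split; intros; try lra; destruct H; lra. Qed.

Lemma emax_ge r a b : ele (Fin r) (emax a b) <-> ele (Fin r) a \/ ele (Fin r) b.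
Proof. destruct a, b; simpl; try tauto; try apply Rmax_ge_iff. Qed.
Lemma emax_le r a b : ele (emax a b) (Fin r) <-> ele a (Fin r) /\ ele b (Fin r).
Proof. destruct a, b; simpl; try tauto; try apply Rmax_le_iff. Qed.
Lemma emin_ge r a b : ele (Fin r) (emin a b) <-> ele (Fin r) a /\ ele (Fin r) b.
Proof. destruct a, b; simpl; try tauto; try apply Rmin_ge_iff. Qed.
Lemma emin_le r a b : ele (emin a b) (Fin r) <-> ele a (Fin r) \/ ele b (Fin r).
Proof. destruct a, b; simpl; try tauto; try apply Rmin_le_iff. Qed.

Lemma fmax_ge r l : ele (Fin r) (fold_right emax NegInf l) <-> exists a, In a l /\ ele (Fin r) a.
Proof.
  induction l as [|x l IH]; cbn [fold_right In].
  - simpl; split; [tauto| intros [a [[] _]]].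
  - rewrite emax_ge, IH. split.
    + intros [H|[a [H1 H2]]]; eauto.
    + intros [a [[<-|H1] H2]]; eauto.
Qed.
Lemma fmax_le r l : ele (fold_right emax NegInf l) (Fin r) <-> forall a, In a l -> ele a (Fin r).
Proof.
  induction l as [|x l IH]; cbn [fold_right In].
  - simpl; split; [tauto| auto].
  - rewrite emax_le, IH. split.
    + intros [H1 H2] a [<-|H]; auto.
    + intros H; split; auto.
Qed.
Lemma fmin_ge r l : ele (Fin r) (fold_right emin PosInf l) <-> forall a, In a l -> ele (Fin r) a.
Proof.
  induction l as [|x l IH]; cbn [fold_right In].
  - simpl; split; [tauto| auto].
  - rewrite emin_ge, IH. split.
    + intros [H1 H2] a [<-|H]; auto.
    + intros H; split; auto.
Qed.
Lemma fmin_le r l : ele (fold_right emin PosInf l) (Fin r) <-> exists a, In a l /\ ele a (Fin r).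
Proof.
  induction l as [|x l IH]; cbn [fold_right In].
  - simpl; split; [tauto| intros [a [[] _]]].
  - rewrite emin_le, IH. split.
    + intros [H|[a [H1 H2]]]; eauto.
    + intros [a [[<-|H1] H2]]; eauto.
Qed.

Lemma ele_eq a r : a = Fin r <-> ele (Fin r) a /\ ele a (Fin r).
Proof. destruct a; simpl; split; intros; try tauto; try discriminate.
  inversion H; lra. f_equal; lra. Qed.

Definition biasC (m n : nat) (A B : tmat) (v : nat -> R) (rho : R) : Prop :=
  forall j, (j < n)%nat ->
   (forall i a, (i < m)%nat -> A i j = Some a ->
      exists h b, (h < n)%nat /\ B i h = Some b /\ rho + v j + a <= b + v h) /\
   (exists i a, (i < m)%nat /\ A i j = Some a /\
      forall h b, (h < n)%nat -> B i h = Some b -> b + v h <= rho + v j + a).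

Lemma tmul_ge n B x i s : ele (Fin s) (tmul n B x i) <->
  exists h b, (h < n)%nat /\ B i h = Some b /\ s <= b + x h.
Proof.
  unfold tmul; rewrite fmax_ge. split.
  - intros [a [Ha Hs]]. apply in_map_iff in Ha as [h [<- Hh]].
    apply in_seq in Hh. destruct (B i h) eqn:E; simpl in Hs; [|tauto].
    exists h, r; split; [lia|]; split; auto; lra.
  - intros [h [b [Hh [E Hs]]]]. exists (eadd (toE (B i h)) (Fin (x h))). split.
    + apply (in_map (fun j => eadd (toE (B i j)) (Fin (x j)))), in_seq; lia.
    + rewrite E; simpl; lra.
Qed.
Lemma tmul_le n B x i s : ele (tmul n B x i) (Fin s) <->
  forall h b, (h < n)%nat -> B i h = Some b -> b + x h <= s.
Proof.
  unfold tmul; rewrite fmax_le. split.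
  - intros H h b Hh E. specialize (H (eadd (toE (B i h)) (Fin (x h)))).
    assert (HI : In (eadd (toE (B i h)) (Fin (x h))) (map (fun j => eadd (toE (B i j)) (Fin (x j))) (seq 0 n))).
    { apply (in_map (fun j => eadd (toE (B i j)) (Fin (x j)))), in_seq; lia. }
    specialize (H HI). rewrite E in H; simpl in H. exact H.
  - intros H a Ha. apply in_map_iff in Ha as [h [<- Hh]]. apply in_seq in Hh.
    destruct (B i h) eqn:E; simpl; auto. apply (H h r); auto; lia.
Qed.

Lemma bias_C m n A B v rho : is_bias m n A B v rho <-> biasC m n A B v rho.
Proof.
  unfold is_bias, biasC, Fmap, sharp. split.
  - intros H j Hj. specialize (H j Hj). apply ele_eq in H as [H1 H2].
    rewrite fmin_ge in H1. rewrite fmin_le in H2. split.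
    + intros i a Hi E. specialize (H1 (eadd (eneg (toE (A i j))) (tmul n B v i))).
      assert (HI : In (eadd (eneg (toE (A i j))) (tmul n B v i)) (map (fun i => eadd (eneg (toE (A i j))) (tmul n B v i)) (seq 0 m))).
      { apply (in_map (fun i => eadd (eneg (toE (A i j))) (tmul n B v i))), in_seq; lia. }
      specialize (H1 HI). rewrite E in H1.
      assert (H3 : ele (Fin (rho + v j)) (eadd (Fin (- a)) (tmul n B v i))) by exact H1.
      assert (H4 : ele (Fin (rho + v j + a)) (tmul n B v i)).
      { destruct (tmul n B v i); simpl in *; auto; lra. }
      apply tmul_ge in H4. exact H4.
    + destruct H2 as [t [Ht H2]]. apply in_map_iff in Ht as [i [<- Hi]]. apply in_seq in Hi.
      destruct (A i j) as [a|] eqn:E; simpl in H2; [|tauto].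
      exists i, a. split; [lia|]. split; auto.
      apply tmul_le. destruct (tmul n B v i); simpl in *; auto; lra.
  - intros H j Hj. specialize (H j Hj) as [H1 [i [a [Hi [E H2]]]]].
    apply ele_eq. split.
    + apply fmin_ge. intros t Ht. apply in_map_iff in Ht as [i' [<- Hi']]. apply in_seq in Hi'.
      destruct (A i' j) as [a'|] eqn:E'; simpl; auto.
      destruct (H1 i' a' ltac:(lia) E') as [h [b [Hh [Eb Hb]]]].
      assert (H4 : ele (Fin (rho + v j + a')) (tmul n B v i')).
      { apply tmul_ge; eauto. }
      destruct (tmul n B v i'); simpl in *; auto; lra.
    + apply fmin_le. exists (eadd (eneg (toE (A i j))) (tmul n B v i)). split.
      * apply (in_map (fun i => eadd (eneg (toE (A i j))) (tmul n B v i))), in_seq; lia.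
      * rewrite E. assert (H4 : ele (tmul n B v i) (Fin (rho + v j + a))).
        { apply tmul_le; auto. }
        destruct (tmul n B v i); simpl in *; auto; lra.
Qed.

Lemma Rabs_bounds x c : Rabs x <= c -> - c <= x <= c.
Proof. intros H. pose proof (Rle_abs x). pose proof (Rle_abs (-x)). rewrite Rabs_Ropp in H1. lra. Qed.

Definition Prel (n : nat) (c : R) (v u : nat -> R) : Prop :=
  forall j h, (j < n)%nat -> (h < n)%nat -> v j <= v h ->
    u h - u j <= v h - v j /\ (v h - v j <= u h - u j \/ c <= u h - u j).

Lemma transfer m n A B rho c v u :
  (forall i j h a b, (i < m)%nat -> (j < n)%nat -> (h < n)%nat ->
     A i j = Some a -> B i h = Some b -> Rabs (rho + a - b) <= c) ->
  biasC m n A B v rho -> Prel n c v u -> biasC m n A B u rho.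
Proof.
  intros HW Hv HP j Hj. destruct (Hv j Hj) as [H1 [i [a [Hi [Ea H2]]]]]. split.
  - intros i' a' Hi' Ea'. destruct (H1 i' a' Hi' Ea') as [h [b [Hh [Eb Hb]]]].
    exists h, b. split; auto. split; auto.
    pose proof (Rabs_bounds _ _ (HW i' j h a' b Hi' Hj Hh Ea' Eb)).
    destruct (Rle_dec (v j) (v h)).
    + destruct (HP j h Hj Hh r) as [_ [H3|H3]]; lra.
    + destruct (HP h j Hh Hj ltac:(lra)) as [H3 _]; lra.
  - exists i, a. split; auto. split; auto. intros h b Hh Eb.
    specialize (H2 h b Hh Eb).
    pose proof (Rabs_bounds _ _ (HW i j h a b Hi Hj Hh Ea Eb)).
    destruct (Rle_dec (v j) (v h)).
    + destruct (HP j h Hj Hh r) as [H3 _]; lra.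
    + destruct (HP h j Hh Hj ltac:(lra)) as [_ [H3|H3]]; lra.
Qed.

Definition dec (P : nat -> Prop) (k : nat) : bool :=
  if excluded_middle_informative (P k) then true else false.
Definition cnt (P : nat -> Prop) (n : nat) : nat := length (filter (dec P) (seq 0 n)).

Lemma dec_t P x : dec P x = true -> P x.
Proof. unfold dec; destruct (excluded_middle_informative (P x)); congruence. Qed.
Lemma dec_f P x : dec P x = false -> ~ P x.
Proof. unfold dec; destruct (excluded_middle_informative (P x)); congruence. Qed.

Lemma filter_le (P Q : nat -> Prop) l : (forall k, In k l -> Q k -> P k) ->
  (length (filter (dec Q) l) <= length (filter (dec P) l))%nat.
Proof.
  induction l as [|x l IH]; simpl; intros H; auto.
  destruct (dec Q x) eqn:EQ, (dec P x) eqn:EP; simpl.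
  - specialize (IH (fun k Hk => H k (or_intror Hk))); lia.
  - exfalso; apply (dec_f _ _ EP); apply H; auto; apply dec_t; auto.
  - specialize (IH (fun k Hk => H k (or_intror Hk))); lia.
  - specialize (IH (fun k Hk => H k (or_intror Hk))); lia.
Qed.

Lemma filter_lt (P Q : nat -> Prop) l k0 : (forall k, In k l -> Q k -> P k) ->
  In k0 l -> P k0 -> ~ Q k0 ->
  (length (filter (dec Q) l) < length (filter (dec P) l))%nat.
Proof.
  induction l as [|x l IH]; simpl; intros H Hin HP HQ; [contradiction|].
  pose proof (filter_le P Q l (fun k Hk => H k (or_intror Hk))) as Hle.
  destruct Hin as [<-|Hin].
  - destruct (dec Q x) eqn:EQ, (dec P x) eqn:EP; simpl.
    + exfalso; exact (HQ (dec_t _ _ EQ)).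
    + exfalso; exact (HQ (dec_t _ _ EQ)).
    + lia.
    + exfalso; exact (dec_f _ _ EP HP).
  - specialize (IH (fun k Hk => H k (or_intror Hk)) Hin HP HQ).
    destruct (dec Q x) eqn:EQ, (dec P x) eqn:EP; simpl.
    + lia.
    + exfalso; apply (dec_f _ _ EP); apply H; auto; apply dec_t; auto.
    + lia.
    + lia.
Qed.

Lemma filter_all l : length (filter (dec (fun _ => True)) l) = length l.
Proof.
  induction l; simpl; auto. destruct (dec (fun _ => True) a) eqn:E; simpl; [lia|exfalso; exact (dec_f _ _ E I)].
Qed.

Lemma cnt_pos (P : nat -> Prop) l k0 : In k0 l -> P k0 -> (1 <= length (filter (dec P) l))%nat.
Proof.
  induction l; simpl; [tauto|]; intros [<-|H] Hp.
  - destruct (dec P a) eqn:E; simpl; [lia|exfalso; exact (dec_f _ _ E Hp)].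
  - destruct (dec P a) eqn:E; simpl; [lia|auto].
Qed.

Lemma fRmax_ge d l y : In y l -> y <= fold_right Rmax d l.
Proof. induction l; simpl; [tauto|]. intros [<-|H]; [apply Rmax_l|]. eapply Rle_trans; [apply IHl; auto| apply Rmax_r]. Qed.
Lemma fRmax_d d l : d <= fold_right Rmax d l.
Proof. induction l; simpl; [lra|]. eapply Rle_trans; [apply IHl| apply Rmax_r]. Qed.
Lemma fRmax_in d l : fold_right Rmax d l = d \/ In (fold_right Rmax d l) l.
Proof. induction l; simpl; auto. destruct (Rle_dec a (fold_right Rmax d l)).
  - rewrite (Rmax_right _ _ r). destruct IHl as [H|H]; auto.
  - rewrite (Rmax_left a (fold_right Rmax d l)) by lra. right; left; auto. Qed.
Lemma fRmin_le d l y : In y l -> fold_right Rmin d l <= y.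
Proof. induction l; simpl; [tauto|]. intros [<-|H]; [apply Rmin_l|]. eapply Rle_trans; [apply Rmin_r|apply IHl; auto]. Qed.
Lemma fRmin_in d l : fold_right Rmin d l = d \/ In (fold_right Rmin d l) l.
Proof. induction l; simpl; auto. destruct (Rle_dec a (fold_right Rmin d l)).
  - rewrite (Rmin_left _ _ r). right; left; auto.
  - rewrite (Rmin_right a (fold_right Rmin d l)) by lra. destruct IHl as [H|H]; auto. Qed.

Definition bad (n : nat) (c : R) (v : nat -> R) (k : nat) : Prop :=
  (exists h, (h < n)%nat /\ v k + c < v h) /\
  ~ (exists l, (l < n)%nat /\ v k < v l /\ v l <= v k + c).

Definition shift (v : nat -> R) (a t : R) (h : nat) : R :=
  if Rlt_dec a (v h) then v h - t else v h.

Lemma gap_split (n : nat) (v : nat -> R) a c t :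
  (forall h, (h < n)%nat -> a < v h -> a + c + t <= v h) ->
  forall h, (h < n)%nat -> v h <= a \/ (a < v h /\ a + c + t <= v h).
Proof. intros HG h Hh. destruct (Rlt_dec a (v h)); [right; auto|left; lra]. Qed.

Lemma shift_Prel n c v a t : 0 < t ->
  (forall h, (h < n)%nat -> a < v h -> a + c + t <= v h) ->
  Prel n c v (shift v a t).
Proof.
  intros Ht HG j h Hj Hh Hle. unfold shift.
  destruct (gap_split n v a c t HG j Hj) as [Gj|Gj];
  destruct (gap_split n v a c t HG h Hh) as [Gh|Gh];
  destruct (Rlt_dec a (v j)); destruct (Rlt_dec a (v h));
  (split; [lra| first [left; lra | right; lra]]).
Qed.

Lemma shift_bad n c v a t : 0 <= c -> 0 < t ->
  (forall h, (h < n)%nat -> a < v h -> a + c + t <= v h) ->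
  forall k, (k < n)%nat -> bad n c (shift v a t) k -> bad n c v k.
Proof.
  intros Hc Ht HG k Hk [[h [Hh H1]] H2]. split.
  - exists h. split; auto. unfold shift in H1.
    destruct (gap_split n v a c t HG k Hk) as [Gk|Gk];
    destruct (gap_split n v a c t HG h Hh) as [Gh|Gh];
    destruct (Rlt_dec a (v k)); destruct (Rlt_dec a (v h)); lra.
  - intros [l [Hl [H3 H4]]]. apply H2. exists l. split; auto. unfold shift.
    destruct (gap_split n v a c t HG k Hk) as [Gk|Gk];
    destruct (gap_split n v a c t HG l Hl) as [Gl|Gl];
    destruct (Rlt_dec a (v k)); destruct (Rlt_dec a (v l)); split; lra.
Qed.

Lemma shift_notbad n c v a t k h' : 0 < c -> v k = a -> (h' < n)%nat -> v h' = a + c + t -> 0 < t ->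
  ~ bad n c (shift v a t) k.
Proof.
  intros Hc Hk Hh' E Ht [_ H]. apply H. exists h'. split; auto. unfold shift.
  destruct (Rlt_dec a (v k)); destruct (Rlt_dec a (v h')); split; lra.
Qed.

Lemma filter_nonzero (P : nat -> Prop) l : length (filter (dec P) l) <> 0%nat ->
  exists k, In k l /\ P k.
Proof.
  induction l; simpl; [tauto|]. destruct (dec P a) eqn:E; simpl; intros H.
  - exists a; split; auto. apply dec_t; auto.
  - destruct (IHl H) as [k [Hk Pk]]; eauto.
Qed.

Lemma reduce m n A B rho c :
  (forall i j h a b, (i < m)%nat -> (j < n)%nat -> (h < n)%nat ->
     A i j = Some a -> B i h = Some b -> Rabs (rho + a - b) <= c) ->
  0 < c ->
  forall N v, biasC m n A B v rho -> (cnt (bad n c v) n <= N)%nat ->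
  exists u, biasC m n A B u rho /\ cnt (bad n c u) n = 0%nat.
Proof.
  intros HW Hc N. induction N as [|N IH]; intros v Hv HN.
  - exists v; split; auto; lia.
  - destruct (Nat.eq_dec (cnt (bad n c v) n) 0) as [E|E]; [exists v; auto|].
    destruct (filter_nonzero _ _ E) as [k [Hk Hbad]]. apply in_seq in Hk.
    pose proof Hbad as [[h0 [Hh0 H0]] Hno].
    set (G := fold_right Rmin (v h0) (map (fun h => if Rlt_dec (v k) (v h) then v h else v h0) (seq 0 n))).
    assert (F1 : forall h, (h < n)%nat -> v k < v h -> G <= v h).
    { intros h Hh Hlt. unfold G.
      assert (HI : In (if Rlt_dec (v k) (v h) then v h else v h0)
         (map (fun h => if Rlt_dec (v k) (v h) then v h else v h0) (seq 0 n))).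
      { apply (in_map (fun h => if Rlt_dec (v k) (v h) then v h else v h0)), in_seq; lia. }
      pose proof (fRmin_le (v h0) _ _ HI) as HH.
      destruct (Rlt_dec (v k) (v h)); [exact HH|contradiction]. }
    assert (F2 : exists h', (h' < n)%nat /\ v k < v h' /\ G = v h').
    { destruct (fRmin_in (v h0) (map (fun h => if Rlt_dec (v k) (v h) then v h else v h0) (seq 0 n))) as [E1|E1].
      - exists h0; split; auto; split; [lra|exact E1].
      - apply in_map_iff in E1 as [h [E2 Hh]]. apply in_seq in Hh.
        destruct (Rlt_dec (v k) (v h)).
        + exists h; split; [lia|]; split; auto.
        + exists h0; split; auto; split; [lra|]. unfold G; rewrite <- E2; auto. }
    destruct F2 as [h' [Hh' [Hlt' EG]]].
    assert (F3 : v k + c < G).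
    { destruct (Rlt_dec (v k + c) G) as [r|r]; auto. exfalso. apply Hno.
      exists h'. split; auto. split; lra. }
    set (t := G - v k - c).
    assert (Ht : 0 < t) by (unfold t; lra).
    assert (HG : forall h, (h < n)%nat -> v k < v h -> v k + c + t <= v h).
    { intros h Hh Hlt. unfold t. pose proof (F1 h Hh Hlt). lra. }
    apply (IH (shift v (v k) t)).
    + apply (transfer m n A B rho c v); auto. apply shift_Prel; auto.
    + assert (cnt (bad n c (shift v (v k) t)) n < cnt (bad n c v) n)%nat; [|lia].
      unfold cnt. apply (filter_lt _ _ _ k).
      * intros k' Hk'. apply in_seq in Hk'. apply (shift_bad n c v (v k) t); auto; [lra|lia].
      * apply in_seq; lia.
      * exact Hbad.
      * apply (shift_notbad n c v (v k) t k h'); auto. unfold t; lra.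
Qed.

Lemma spread n c v : 0 <= c -> (forall k, (k < n)%nat -> ~ bad n c v k) ->
  forall N k, (k < n)%nat -> (cnt (fun h => Rlt (v k) (v h)) n <= N)%nat ->
  forall h, (h < n)%nat -> v h - v k <= INR (cnt (fun h => Rlt (v k) (v h)) n) * c.
Proof.
  intros Hc Hnb N. induction N as [|N IH]; intros k Hk HN h Hh.
  - destruct (Rle_dec (v h) (v k)).
    + pose proof (pos_INR (cnt (fun h => Rlt (v k) (v h)) n)). nra.
    + exfalso. assert (1 <= cnt (fun h => Rlt (v k) (v h)) n)%nat; [|lia].
      apply (cnt_pos _ _ h); [apply in_seq; lia|lra].
  - destruct (Rle_dec (v h) (v k)).
    + pose proof (pos_INR (cnt (fun h => Rlt (v k) (v h)) n)). nra.
    + assert (C1 : (1 <= cnt (fun h => Rlt (v k) (v h)) n)%nat).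
      { apply (cnt_pos _ _ h); [apply in_seq; lia|lra]. }
      apply le_INR in C1. simpl in C1.
      destruct (Rle_dec (v h) (v k + c)); [nra|].
      assert (Hl : exists l, (l < n)%nat /\ v k < v l /\ v l <= v k + c).
      { apply NNPP. intros Hn. apply (Hnb k Hk). split; auto. exists h; split; auto; lra. }
      destruct Hl as [l [Hl [Hl1 Hl2]]].
      assert (Hlt : (cnt (fun h => Rlt (v l) (v h)) n < cnt (fun h => Rlt (v k) (v h)) n)%nat).
      { unfold cnt. apply (filter_lt _ _ _ l).
        - intros x _ Hx. lra.
        - apply in_seq; lia.
        - exact Hl1.
        - lra. }
      pose proof (IH l Hl ltac:(lia) h Hh) as IHh.
      apply lt_INR in Hlt. 
      assert (INR (cnt (fun h => Rlt (v l) (v h)) n) + 1 <= INR (cnt (fun h => Rlt (v k) (v h)) n)).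
      { rewrite <- S_INR. apply le_INR. apply INR_lt in Hlt. lia. }
      nra.
Qed.

Lemma hilbert_le n x K : (1 <= n)%nat ->
  (forall j h, (j < n)%nat -> (h < n)%nat -> x h - x j <= K) -> hilbert n x <= K.
Proof.
  intros Hn H. unfold hilbert, hmax, hmin.
  assert (E1 : exists h, (h < n)%nat /\ fold_right Rmax (x 0%nat) (map x (seq 0 n)) = x h).
  { destruct (fRmax_in (x 0%nat) (map x (seq 0 n))) as [E|E].
    - exists 0%nat; split; auto; lia.
    - apply in_map_iff in E as [h [E Hh]]. apply in_seq in Hh. exists h; split; auto; lia. }
  assert (E2 : exists h, (h < n)%nat /\ fold_right Rmin (x 0%nat) (map x (seq 0 n)) = x h).
  { destruct (fRmin_in (x 0%nat) (map x (seq 0 n))) as [E|E].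
    - exists 0%nat; split; auto; lia.
    - apply in_map_iff in E as [h [E Hh]]. apply in_seq in Hh. exists h; split; auto; lia. }
  destruct E1 as [h [Hh ->]]. destruct E2 as [j [Hj ->]]. auto.
Qed.

Lemma W_ge m n A B i j h : (i < m)%nat -> (j < n)%nat -> (h < n)%nat ->
  Wterm A B i j h <= Wconst m n A B.
Proof.
  intros Hi Hj Hh. unfold Wconst.
  eapply Rle_trans; [|apply fRmax_ge, (in_map (fun i => fold_right Rmax 0 (map (fun j =>
      fold_right Rmax 0 (map (fun h => Wterm A B i j h) (seq 0 n))) (seq 0 n))) (seq 0 m) i), in_seq; lia].
  eapply Rle_trans; [|apply fRmax_ge, (in_map (fun j =>
      fold_right Rmax 0 (map (fun h => Wterm A B i j h) (seq 0 n))) (seq 0 n) j), in_seq; lia].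
  apply fRmax_ge, (in_map (fun h => Wterm A B i j h) (seq 0 n) h), in_seq; lia.
Qed.

Lemma W_nonneg m n A B : 0 <= Wconst m n A B.
Proof. apply fRmax_d. Qed.

Theorem mainTheorem12 (m n : nat) (A B : tmat)
  (Hn : (1 <= n)%nat)
  (HA : forall j, (j < n)%nat -> exists i, (i < m)%nat /\ A i j <> None)
  (HB : forall i, (i < m)%nat -> exists j, (j < n)%nat /\ B i j <> None)
  (v : nat -> R) (rho : R) (Hv : is_bias m n A B v rho) :
  forall RF : R, is_inf (bias_norms m n A B rho) RF ->
  RF <= (INR n - 1) * (Rabs rho + Wconst m n A B).
Proof.
  intros RF [Hinf _].
  set (c := Rabs rho + Wconst m n A B).
  assert (HW : forall i j h a b, (i < m)%nat -> (j < n)%nat -> (h < n)%nat ->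
     A i j = Some a -> B i h = Some b -> Rabs (rho + a - b) <= c).
  { intros i j h a b Hi Hj Hh Ea Eb. pose proof (W_ge m n A B i j h Hi Hj Hh) as HH.
    unfold Wterm in HH. rewrite Ea, Eb in HH. unfold c.
    replace (rho + a - b) with (rho + (a - b)) by ring.
    eapply Rle_trans; [apply Rabs_triang|lra]. }
  assert (Hc0 : 0 <= c) by (unfold c; pose proof (Rabs_pos rho); pose proof (W_nonneg m n A B); lra).
  assert (Hn1 : 0 <= INR n - 1) by (apply le_INR in Hn; simpl in Hn; lra).
  apply bias_C in Hv.
  destruct (Req_dec c 0) as [E0|E0].
  - assert (Hu : biasC m n A B (fun _ => 0) rho).
    { apply (transfer m n A B rho c v); auto. intros j h _ _ Hle. split; [lra|right; lra]. }
    apply bias_C in Hu.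
    eapply Rle_trans; [apply Hinf; exists (fun _ => 0); split; [exact Hu|reflexivity]|].
    apply hilbert_le; auto. intros; nra.
  - destruct (reduce m n A B rho c HW ltac:(lra) _ v Hv (le_n _)) as [u [Hu Hcnt]].
    assert (Hnb : forall k, (k < n)%nat -> ~ bad n c u k).
    { intros k Hk Hb. assert (1 <= cnt (bad n c u) n)%nat; [|lia].
      apply (cnt_pos _ _ k); auto. apply in_seq; lia. }
    apply bias_C in Hu.
    eapply Rle_trans; [apply Hinf; exists u; split; [exact Hu|reflexivity]|].
    apply hilbert_le; auto. intros j h Hj Hh.
    pose proof (spread n c u Hc0 Hnb _ j Hj (le_n _) h Hh) as Hs.
    assert (Hlt : (cnt (fun h => Rlt (u j) (u h)) n < n)%nat).
    { unfold cnt. assert (EL : length (filter (dec (fun _ => True)) (seq 0 n)) = n)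
        by (rewrite filter_all; apply length_seq).
      rewrite <- EL at 2.
      apply (filter_lt _ _ _ j).
      - auto.
      - apply in_seq; lia.
      - exact I.
      - lra. }
    assert (INR (cnt (fun h => Rlt (u j) (u h)) n) <= INR n - 1).
    { assert (S (cnt (fun h => Rlt (u j) (u h)) n) <= n)%nat by lia. apply le_INR in H.
      rewrite S_INR in H. lra. }
    nra.
Qed.
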